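(* Let $p\ge2$, $\mathcal K>0$, let $a\colon\mathbb{R}^{Nn}\to\mathbb{R}^{Nn}$ be $C^1$ and let $\omega\colon[0,\infty)\to[0,\infty)$ be bounded with $\lim_{s\to\infty}\omega(s)=0$ and $|Da(\xi)-Db(\xi)|\le\omega(|\xi|)(1+|\xi|)^{p-2}$ for all $\xi$, where $b(\xi)=\mathcal K|\xi|^{p-2}\xi$. For $\epsilon>0$ let $K_\epsilon\ge1$ (depending on $\epsilon$ and $\omega$) be such that $\omega(s)\le\epsilon$ for all $s\ge K_\epsilon$. There exists $c=c(p)$ such that: whenever $\delta\ge0$ and $A\in\mathbb{R}^{Nn}$ satisfy $$|A|+\delta\ge\frac{8\|\omega\|_\infty K_\epsilon}{\epsilon},$$ then for every $\xi\in\mathbb{R}^{Nn}$ $$|a(A)-a(\xi)-[b(A)-b(\xi)]|\le c\,\epsilon\,(|\xi-A|+\delta)\big(1+|A|^2+|\xi-A|^2\big)^{\frac{p-2}2}.$$ *)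

(* Defs.v *)
From HB Require Import structures.
From mathcomp Require Import all_boot all_order all_algebra.
From mathcomp Require Import all_classical all_reals all_analysis.
Set Implicit Arguments. Unset Strict Implicit. Unset Printing Implicit Defensive.
Import Order.TTheory GRing.Theory Num.Theory.
Import numFieldNormedType.Exports.
Local Open Scope ring_scope.
Local Open Scope classical_set_scope.

(* Points of R^{Nn} are represented as N x n real matrices. *)
Definition enorm (R : realType) (N n : nat) (A : 'M[R]_(N, n)) : R :=
  Num.sqrt (\sum_(i < N) \sum_(j < n) A i j ^+ 2).

Definition bfun (R : realType) (N n : nat) (p K : R) (xi : 'M[R]_(N, n))
  : 'M[R]_(N, n) := (K * (enorm xi `^ (p - 2))) *: xi.

Definition opnorm_le (R : realType) (N n : nat)
  (L : 'M[R]_(N, n) -> 'M[R]_(N, n)) (M : R) : Prop :=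
  forall h, enorm (L h) <= M * enorm h.

(* a is C^1: differentiable everywhere with continuous derivative
   (continuity of xi |-> Da(xi) tested on every direction h, equivalent
   in finite dimension). *)
Definition C1 (R : realType) (N n : nat) (a : 'M[R]_(N, n) -> 'M[R]_(N, n)) : Prop :=
  (forall x, differentiable a x) /\
  (forall h : 'M[R]_(N, n), continuous (fun x => ('d a x : 'M[R]_(N, n) -> 'M[R]_(N, n)) h)).

Definition supnorm (R : realType) (omega : R -> R) : R :=
  sup [set omega s | s in [set s : R | 0 <= s]].

(* Main.v *)
Require Import Defs.
From HB Require Import structures.
From mathcomp Require Import all_boot all_order all_algebra.
From mathcomp Require Import all_classical all_reals all_analysis.
From mathcomp Require Import ring lra.
Import Order.TTheory GRing.Theory Num.Theory.
Import numFieldNormedType.Exports.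
Local Open Scope ring_scope.
Local Open Scope classical_set_scope.
Set Implicit Arguments. Unset Strict Implicit. Unset Printing Implicit Defensive.
Definition dotm (R : realType) (N n : nat) (X Y : 'M[R]_(N, n)) : R :=
  \sum_(i < N) \sum_(j < n) X i j * Y i j.

Lemma dotmC (R : realType) (N n : nat) (X Y : 'M[R]_(N, n)) : dotm X Y = dotm Y X.
Proof. by apply: eq_bigr => i _; apply: eq_bigr => j _; rewrite mulrC. Qed.

Lemma dotmDl (R : realType) (N n : nat) (X Y Z : 'M[R]_(N, n)) :
  dotm (X + Y) Z = dotm X Z + dotm Y Z.
Proof.
rewrite /dotm -big_split; apply: eq_bigr => i _ /=.
rewrite -big_split; apply: eq_bigr => j _ /=; by rewrite !mxE mulrDl.
Qed.

Lemma dotmZl (R : realType) (N n : nat) (s : R) (X Z : 'M[R]_(N, n)) :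
  dotm (s *: X) Z = s * dotm X Z.
Proof.
rewrite /dotm mulr_sumr; apply: eq_bigr => i _ /=.
rewrite mulr_sumr; apply: eq_bigr => j _ /=; by rewrite !mxE mulrA.
Qed.

Lemma dotmNl (R : realType) (N n : nat) (X Z : 'M[R]_(N, n)) :
  dotm (- X) Z = - dotm X Z.
Proof. by rewrite -scaleN1r dotmZl mulN1r. Qed.

Lemma dotmBl (R : realType) (N n : nat) (X Y Z : 'M[R]_(N, n)) :
  dotm (X - Y) Z = dotm X Z - dotm Y Z.
Proof. by rewrite dotmDl dotmNl. Qed.

Lemma dotmDr (R : realType) (N n : nat) (X Y Z : 'M[R]_(N, n)) :
  dotm Z (X + Y) = dotm Z X + dotm Z Y.
Proof. by rewrite dotmC dotmDl !(dotmC Z). Qed.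

Lemma dotmZr (R : realType) (N n : nat) (s : R) (X Z : 'M[R]_(N, n)) :
  dotm Z (s *: X) = s * dotm Z X.
Proof. by rewrite dotmC dotmZl dotmC. Qed.

Lemma dotmNr (R : realType) (N n : nat) (X Z : 'M[R]_(N, n)) :
  dotm Z (- X) = - dotm Z X.
Proof. by rewrite dotmC dotmNl dotmC. Qed.

Lemma dotm_ge0 (R : realType) (N n : nat) (X : 'M[R]_(N, n)) : 0 <= dotm X X.
Proof.
by apply: sumr_ge0 => i _; apply: sumr_ge0 => j _; rewrite -expr2 sqr_ge0.
Qed.

Lemma enorm_sqr (R : realType) (N n : nat) (X : 'M[R]_(N, n)) :
  enorm X ^+ 2 = dotm X X.
Proof.
rewrite /enorm sqr_sqrtr; last first.
  by apply: sumr_ge0 => i _; apply: sumr_ge0 => j _; rewrite sqr_ge0.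
by apply: eq_bigr => i _; apply: eq_bigr => j _; rewrite expr2.
Qed.

Lemma enorm_ge0 (R : realType) (N n : nat) (X : 'M[R]_(N, n)) : 0 <= enorm X.
Proof. exact: sqrtr_ge0. Qed.

Lemma quad_disc (R : realType) (a b c : R) :
  0 <= b -> (forall t, 0 <= a - 2 * t * c + t ^+ 2 * b) -> c ^+ 2 <= a * b.
Proof.
move=> b0 H.
have [bz|bp] := eqVneq b 0.
  subst b; rewrite mulr0.
  have [cz|cn] := eqVneq c 0; first by rewrite cz expr0n.
  have := H ((a + 1) / (2 * c)).
  rewrite mulr0 addr0.
  have -> : 2 * ((a + 1) / (2 * c)) * c = a + 1.
    field; exact: cn.
  lra.
have bpos : 0 < b by rewrite lt_def bp b0.
have := H (c / b).
have -> : a - 2 * (c / b) * c + (c / b) ^+ 2 * b = a - c ^+ 2 / b.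
  by field.
rewrite subr_ge0 ler_pdivrMr //.
Qed.

Lemma dotmBr (R : realType) (N n : nat) (X Y Z : 'M[R]_(N, n)) :
  dotm Z (X - Y) = dotm Z X - dotm Z Y.
Proof. by rewrite dotmDr dotmNr. Qed.

Lemma dotm_CS2 (R : realType) (N n : nat) (X Y : 'M[R]_(N, n)) :
  dotm X Y ^+ 2 <= dotm X X * dotm Y Y.
Proof.
apply: quad_disc; first exact: dotm_ge0.
move=> t; have := dotm_ge0 (X - t *: Y).
rewrite !dotmBl !dotmBr !dotmZl !dotmZr (dotmC Y X).
set a := dotm X X; set b := dotm Y Y; set c := dotm X Y.
have -> : a - t * c - (t * c - t * (t * b)) = a - 2 * t * c + t ^+ 2 * b by ring.
by [].
Qed.

Lemma dotm_CS (R : realType) (N n : nat) (X Y : 'M[R]_(N, n)) :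
  dotm X Y <= enorm X * enorm Y.
Proof.
have eX : \sum_(i < N) \sum_(j < n) X i j ^+ 2 = dotm X X.
  by apply: eq_bigr => i _; apply: eq_bigr => j _; rewrite expr2.
have eY : \sum_(i < N) \sum_(j < n) Y i j ^+ 2 = dotm Y Y.
  by apply: eq_bigr => i _; apply: eq_bigr => j _; rewrite expr2.
rewrite /enorm eX eY -sqrtrM; last exact: dotm_ge0.
apply: le_trans (ler_norm _) _.
rewrite -sqrtr_sqr; apply: ler_wsqrtr; exact: dotm_CS2.
Qed.
Lemma enorm_dotm (R : realType) (N n : nat) (X : 'M[R]_(N, n)) :
  enorm X = Num.sqrt (dotm X X).
Proof.
by rewrite /enorm; congr Num.sqrt; apply: eq_bigr => i _; apply: eq_bigr => j _; rewrite expr2.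
Qed.

Lemma enormD (R : realType) (N n : nat) (X Y : 'M[R]_(N, n)) :
  enorm (X + Y) <= enorm X + enorm Y.
Proof.
have h1 := enorm_ge0 (X + Y); have h2 := enorm_ge0 X; have h3 := enorm_ge0 Y.
have : enorm (X + Y) ^+ 2 <= (enorm X + enorm Y) ^+ 2.
  rewrite enorm_sqr dotmDl !dotmDr (dotmC Y X).
  have := dotm_CS X Y; rewrite sqrrD !enorm_sqr; lra.
move=> H; nra.
Qed.

Lemma enormZ (R : realType) (N n : nat) (s : R) (X : 'M[R]_(N, n)) :
  enorm (s *: X) = `|s| * enorm X.
Proof.
rewrite !enorm_dotm dotmZl dotmZr mulrA -expr2 sqrtrM ?sqr_ge0 //.
by rewrite sqrtr_sqr.
Qed.

Lemma enormN (R : realType) (N n : nat) (X : 'M[R]_(N, n)) :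
  enorm (- X) = enorm X.
Proof. by rewrite -scaleN1r enormZ normrN normr1 mul1r. Qed.

Lemma enormB (R : realType) (N n : nat) (X Y : 'M[R]_(N, n)) :
  enorm (X - Y) = enorm (Y - X).
Proof. by rewrite -enormN opprB. Qed.

Lemma enorm0 (R : realType) (N n : nat) : enorm (0 : 'M[R]_(N, n)) = 0.
Proof. by rewrite -(scale0r 0) enormZ normr0 mul0r. Qed.

Lemma dotm_le (R : realType) (N n : nat) (X Y : 'M[R]_(N, n)) :
  `|dotm X Y| <= enorm X * enorm Y.
Proof.
rewrite ler_norml dotm_CS andbT.
have := dotm_CS (- X) Y; rewrite dotmNl enormN; lra.
Qed.
Lemma entry_le (R : realType) (N n : nat) (X : 'M[R]_(N, n)) i j :
  `|X i j| <= `|X|.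
Proof.
rewrite (_ : `|X| = mx_norm X) // mx_normrE.
have := @le_bigmax _ _ _ 0 (fun ij : 'I_N * 'I_n => `|X ij.1 ij.2|) (i, j).
by apply.
Qed.

Lemma sum_single (R : realType) (N n : nat) (F : 'I_N -> 'I_n -> R) i j :
  (forall i j, 0 <= F i j) -> F i j <= \sum_(i < N) \sum_(j < n) F i j.
Proof.
move=> F0.
rewrite (bigD1 i) //= (bigD1 j) //= -addrA lerDl.
apply: addr_ge0; first by apply: sumr_ge0.
by apply: sumr_ge0 => k _; apply: sumr_ge0.
Qed.

Lemma norm_le_enorm (R : realType) (N n : nat) (X : 'M[R]_(N, n)) :
  `|X| <= enorm X.
Proof.
rewrite (_ : `|X| = mx_norm X) //.
have [->|/mx_norm_neq0 [[i j] /= ->]] := eqVneq (mx_norm X) 0.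
  exact: enorm_ge0.
rewrite -sqrtr_sqr; apply: ler_wsqrtr.

exact: (@sum_single R N n (fun i j => X i j ^+ 2) i j (fun _ _ => sqr_ge0 _)).
Qed.

Lemma enorm_le_norm (R : realType) (N n : nat) (X : 'M[R]_(N, n)) :
  enorm X <= Num.sqrt (N%:R * n%:R) * `|X|.
Proof.
rewrite -(ger0_norm (normr_ge0 X)) -sqrtr_sqr -sqrtrM ?mulr_ge0 ?ler0n //.
apply: ler_wsqrtr.
apply: le_trans (_ : \sum_(i < N) \sum_(j < n) `|X| ^+ 2 <= _).
  apply: ler_sum => i _; apply: ler_sum => j _.
  rewrite -real_normK ?num_real //; apply: lerXn2r; rewrite ?nnegrE ?normr_ge0 //.
  exact: entry_le.
rewrite sumr_const card_ord sumr_const card_ord -mulrnA -(mulr_natl (`|X| ^+ 2)) expr2 !mulrA.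
by rewrite natrM (mulrC n%:R).
Qed.
Definition sqs (R : realType) (N n : nat) (X : 'M[R]_(N, n)) : R :=
  \sum_(i < N) \sum_(j < n) X i j ^+ 2.

Lemma sqs_ge0 (R : realType) (N n : nat) (X : 'M[R]_(N, n)) : 0 <= sqs X.
Proof. by apply: sumr_ge0 => i _; apply: sumr_ge0 => j _; rewrite sqr_ge0. Qed.

Lemma diff_sqs (R : realType) (N n : nat) (X : 'M[R]_(N, n)) :
  differentiable (@sqs R N n) X.
Proof.
have -> : @sqs R N n = \sum_(i < N) (fun Y : 'M[R]_(N, n) => \sum_(j < n) Y i j ^+ 2).
  by rewrite fct_sumE.
apply: differentiable_sum => i.
have -> : (fun Y : 'M[R]_(N, n) => \sum_(j < n) Y i j ^+ 2) =
   \sum_(j < n) ((fun Y : 'M[R]_(N, n) => Y i j) ^+ 2).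
  rewrite fct_sumE; apply: funext => Y; apply: eq_bigr => j _.
  by rewrite /GRing.exp /=.
apply: differentiable_sum => j.
exact/differentiableX/differentiable_coord.
Qed.
Lemma enorm_powR (R : realType) (N n : nat) (q : R) (X : 'M[R]_(N, n)) :
  enorm X `^ q = sqs X `^ (q / 2).
Proof.
rewrite /enorm -powR12_sqrt; last exact: sqs_ge0.
by rewrite -powRrM mulrC.
Qed.

Lemma bfunE (R : realType) (N n : nat) (p K : R) (X : 'M[R]_(N, n)) :
  bfun p K X = (K * sqs X `^ ((p - 2) / 2)) *: X.
Proof. by rewrite /bfun enorm_powR. Qed.
Lemma diff_scale_self (R : realType) (N n : nat) (k : 'M[R]_(N, n) -> R) X :
  differentiable k X -> differentiable (fun Y => k Y *: Y) X.
Proof.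
move=> dk.
have -> : (fun Y : 'M[R]_(N, n) => k Y *: Y) =
  \sum_(i < N) \sum_(j < n)
     (fun Y : 'M[R]_(N, n) => (k Y * Y i j) *: (delta_mx i j : 'M[R]_(N, n))).
  apply: funext => Y; rewrite fct_sumE.
  transitivity (k Y *: \sum_(i < N) \sum_(j < n) Y i j *: (delta_mx i j : 'M[R]_(N, n))).
    by rewrite -matrix_sum_delta.
  rewrite scaler_sumr; apply: eq_bigr => i _.
  rewrite fct_sumE scaler_sumr; apply: eq_bigr => j _.
  by rewrite scalerA.
apply: (@differentiable_sum R _ _ N) => i.
 apply: differentiable_sum => j.
apply: (@differentiableZl _ _ _ (k * (fun Y : 'M[R]_(N, n) => Y i j))).
exact/differentiableM/differentiable_coord.
Qed.
Lemma bfun0 (R : realType) (N n : nat) (p K : R) : bfun p K (0 : 'M[R]_(N, n)) = 0.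
Proof. by rewrite /bfun scaler0. Qed.

Lemma bfun_small (R : realType) (N n : nat) (p K C0 : R) (x : 'M[R]_(N, n)) (eps : R) :
  2 < p -> 0 < K -> 0 < eps -> 0 <= C0 -> enorm x <= C0 * `|x| ->
  `|x| < (eps / (K * (C0 + 1))) `^ ((p - 2)^-1) / (C0 + 1) ->
  `|bfun p K x| <= eps * `|x|.
Proof.
move=> p2 K0 e0 C00 hx xr.
have C10 : 0 < C0 + 1 by lra.
have y0 : 0 < eps / (K * (C0 + 1)) by rewrite divr_gt0 // mulr_gt0.
move: xr; set y := eps / (K * (C0 + 1)) => xr.
have en0 := enorm_ge0 x.
have nx0 : 0 <= `|x| := normr_ge0 x.
have hy : enorm x <= y `^ ((p - 2)^-1).
  apply: le_trans hx _.
  have : (C0 + 1) * `|x| <= y `^ ((p - 2)^-1).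
    by rewrite -ler_pdivlMl // mulrC; apply: ltW.
  move=> h; apply: le_trans h; rewrite mulrDl mul1r lerDl //.
have hp : enorm x `^ (p - 2) <= y.
  apply: le_trans (ge0_ler_powR _ _ _ hy) _.
  - lra.
  - by rewrite nnegrE.
  - by rewrite nnegrE powR_ge0.
  have pn : p - 2 != 0 by rewrite subr_eq0 gt_eqF.
  by rewrite -powRrM mulVf // powRr1 // ltW.
apply: le_trans (norm_le_enorm _) _.
rewrite /bfun enormZ ger0_norm; last by rewrite mulr_ge0 ?powR_ge0 ?ltW.
have : K * enorm x `^ (p - 2) <= K * y by rewrite ler_pM2l.
have -> : K * y = eps / (C0 + 1).
  by rewrite /y; field; rewrite gt_eqF // gt_eqF.
move=> h1.
apply: le_trans (ler_wpM2r en0 h1) _.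
apply: le_trans (ler_wpM2l _ hx) _; first by rewrite divr_ge0 ?ltW.
have c1 : C0 / (C0 + 1) <= 1 by rewrite ler_pdivrMr //; lra.
have -> : eps / (C0 + 1) * (C0 * `|x|) = (eps * `|x|) * (C0 / (C0 + 1)).
  by field; rewrite gt_eqF.
rewrite ler_piMr //; by rewrite mulr_ge0 // ltW.
Qed.
Lemma diff_bfun0 (R : realType) (N n : nat) (p K : R) :
  2 < p -> 0 < K -> differentiable (bfun p K) (0 : 'M[R]_(N, n)).
Proof.
move=> p2 K0.
have zlin : linear (fun _ : 'M[R]_(N, n) => (0 : 'M[R]_(N, n))).
  by move=> a u v; rewrite scaler0 addr0.
pose zM := GRing.isLinear.Build _ _ _ _ _ zlin.
pose zL : {linear 'M[R]_(N, n) -> 'M[R]_(N, n)} := HB.pack (fun _ : 'M[R]_(N, n) => (0 : 'M[R]_(N, n))) zM.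
have zc : continuous zL by move=> x; apply: cst_continuous.
have eqo : bfun p K \o shift 0 = cst (bfun p K 0) + zL +o_ (0 : 'M[R]_(N, n)) id.
  apply/eqaddoP => eps e0.
  set C0 := Num.sqrt (N%:R * n%:R : R).
  have C00 : 0 <= C0 by exact: sqrtr_ge0.
  have r0 : 0 < (eps / (K * (C0 + 1))) `^ ((p - 2)^-1) / (C0 + 1).
    by rewrite divr_gt0 ?powR_gt0 ?divr_gt0 ?mulr_gt0 //; lra.
  apply: filterS (nbhs0_lt r0) => x hx /=.
  have -> : (bfun p K \o +%R^~ 0 - (cst (bfun p K 0) + (fun=> 0))) x = bfun p K x.
    by rewrite !fctE /= addr0 bfun0 !addr0 subr0.
  exact: (bfun_small p2 K0 e0 C00 (enorm_le_norm x) hx).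
have dE := diff_unique zc eqo.
apply/diff_locallyP; rewrite dE; split => //.
Qed.
Lemma diff_bfun (R : realType) (N n : nat) (p K : R) (X : 'M[R]_(N, n)) :
  2 <= p -> 0 < K -> differentiable (bfun p K) X.
Proof.
move=> p2 K0.
have bE : bfun p K = (fun Y : 'M[R]_(N, n) => (K * sqs Y `^ ((p - 2) / 2)) *: Y).
  by apply: funext => Y; rewrite bfunE.
have [pe|pgt] : p = 2 \/ 2 < p.
  by move: p2; rewrite le_eqVlt => /orP [/eqP ->|->]; [left|right].
  rewrite bE; apply: diff_scale_self.
  have -> : (fun Y : 'M[R]_(N, n) => K * sqs Y `^ ((p - 2) / 2)) = cst K.
    by apply: funext => Y; rewrite pe subrr mul0r powRr0 mulr1.
  exact: differentiable_cst.
have [s0|s0] := eqVneq (sqs X) 0.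
  have -> : X = 0.
    apply/normr0_eq0; apply/eqP; rewrite eq_le normr_ge0 andbT.
    by apply: le_trans (norm_le_enorm X) _; rewrite /enorm -/(sqs X) s0 sqrtr0.
  exact: diff_bfun0.
have sp : 0 < sqs X by rewrite lt_def s0 sqs_ge0.
rewrite bE; apply: diff_scale_self.
have -> : (fun Y : 'M[R]_(N, n) => K * sqs Y `^ ((p - 2) / 2)) =
   cst K * ((@powR R ^~ ((p - 2) / 2)) \o (@sqs R N n)) by [].

apply: differentiableM; first exact: differentiable_cst.
apply: differentiable_comp; first exact: diff_sqs.
apply/derivable1_diffP; apply: derivable_powR.
by rewrite in_itv /= sp.
Qed.
Lemma diff_dotm (R : realType) (N n : nat) (e X : 'M[R]_(N, n)) :
  differentiable (fun Y : 'M[R]_(N, n) => dotm Y e) X.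
Proof.
have -> : (fun Y : 'M[R]_(N, n) => dotm Y e) =
  \sum_(i < N) \sum_(j < n) (fun Y : 'M[R]_(N, n) => Y i j * e i j).
  by apply: funext => Y; rewrite /dotm fct_sumE; apply: eq_bigr => i _; rewrite fct_sumE.
apply: differentiable_sum => i; apply: differentiable_sum => j.
apply: (@differentiableM _ _ (fun Y : 'M[R]_(N, n) => Y i j) (cst (e i j))).
  exact: differentiable_coord.
exact: differentiable_cst.
Qed.

Lemma deriv_g (R : realType) (N n : nat) (F : 'M[R]_(N, n) -> 'M[R]_(N, n))
    (xi h e : 'M[R]_(N, n)) (t : R) :
  differentiable F (xi + t *: h) ->
  is_derive t 1 (fun s => dotm (F (xi + s *: h)) e)
    (dotm ('d F (xi + t *: h) h) e).
Proof.
move=> dF.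
have llin : linear (fun Y : 'M[R]_(N, n) => dotm Y e).
  by move=> a u v; rewrite dotmDl dotmZl.
pose lM := GRing.isLinear.Build _ _ _ _ _ llin.
pose lL : {linear 'M[R]_(N, n) -> R} := HB.pack (fun Y : 'M[R]_(N, n) => dotm Y e) lM.
have lc : continuous lL.
  by move=> x; apply: differentiable_continuous; exact: diff_dotm.
have dl : forall x, 'd (fun Y : 'M[R]_(N, n) => dotm Y e) x = (fun Y => dotm Y e) :> ('M[R]_(N, n) -> R).
  by move=> x; exact: (diff_lin x lc).
pose u := cst xi + ( *:%R ^~ h) : R -> 'M[R]_(N, n).
have uE : forall s, u s = xi + s *: h by [].
have du : is_diff t u (0 + *:%R ^~ h) by apply: is_diffD.
have gE : (fun s => dotm (F (xi + s *: h)) e) = (fun Y => dotm Y e) \o (F \o u) by [].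
have dFu : differentiable F (u t) by rewrite uE.
have dg : differentiable ((fun Y => dotm Y e) \o (F \o u)) t.
  apply: differentiable_comp; first exact: differentiable_comp.
  exact: (@diff_dotm R N n e ((F \o u) t)).
rewrite gE.
have -> : dotm ('d F (xi + t *: h) h) e = 'D_1 ((fun Y => dotm Y e) \o (F \o u)) t.
  rewrite (deriveE _ dg).
  have dFu' : differentiable (F \o u) t by exact: differentiable_comp.
  rewrite (diff_comp dFu' (@diff_dotm R N n e ((F \o u) t))).
  rewrite (diff_comp _ dFu); last exact: ex_diff.
  rewrite dl (@diff_val _ _ _ _ _ u _ du) /=.
  by rewrite !fctE add0r scale1r.
apply/derivableP/diff_derivable; exact: dg.
Qed.
Lemma mvi (R : realType) (g g' : R -> R) (s1 s2 M : R) :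
  s1 <= s2 -> (forall t : R, is_derive t (1 : R) g (g' t)) ->
  (forall t, s1 < t < s2 -> g' t <= M) -> g s2 - g s1 <= M * (s2 - s1).
Proof.
move=> s12 dg bd.
have [e|lt] := eqVneq s1 s2.
  by rewrite e !subrr mulr0.
have s12' : s1 < s2 by rewrite lt_def eq_sym lt s12.
have gc : continuous g.
  move=> x; apply: differentiable_continuous; apply/derivable1_diffP.
  exact: (@ex_derive _ _ _ _ _ _ _ (dg x)).
have [c cin ->] := MVT s12' (fun x _ => dg x) (continuous_subspaceT gc).
rewrite ler_pM2r ?subr_gt0 //; apply: bd.
by move: cin; rewrite in_itv /=.
Qed.
Lemma pow_bound (R : realType) (p z x y : R) :
  2 <= p -> 0 <= z -> 0 <= x -> 0 <= y -> z <= x + y ->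
  (1 + z) `^ (p - 2) <= 3 `^ ((p - 2) / 2) * (1 + x ^+ 2 + y ^+ 2) `^ ((p - 2) / 2).
Proof.
move=> p2 z0 x0 y0 zxy.
have q0 : 0 <= (p - 2) / 2 by rewrite divr_ge0 //; lra.
apply: le_trans (_ : (1 + x + y) `^ (p - 2) <= _).
  apply: ge0_ler_powR; rewrite ?nnegrE; try lra.

rewrite [X in _ `^ X <= _](_ : p - 2 = 2%:R * ((p - 2) / 2)); last by field.
rewrite powRrM powR_mulrn; last lra.
rewrite -powRM; last 2 first.
- lra.
- nra.
have h1 := sqr_ge0 (1 - x); have h2 := sqr_ge0 (1 - y); have h3 := sqr_ge0 (x - y).
apply: ge0_ler_powR; rewrite ?nnegrE //; nra.
Qed.
Lemma sub4 (V : zmodType) (x y z w : V) : x - y - (z - w) = x - z - (y - w).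
Proof. by rewrite opprB [in RHS]opprB !addrA addrAC [x - y - z]addrAC [in RHS]addrAC. Qed.
Lemma uEq (R : realType) (N n : nat) (A xi : 'M[R]_(N, n)) (t : R) :
  xi + t *: (A - xi) = A + (1 - t) *: (- (A - xi)).
Proof.
rewrite scalerN scalerBl scale1r opprB.
by rewrite [in RHS]addrCA [X in _ + (A + X)]opprB [A + (xi - A)]addrC subrK addrC.
Qed.
Theorem lemma3p16 (R : realType) (p : R) (hp : 2 <= p) :
  exists c : R, 0 < c /\
  forall (N n : nat) (K : R) (a : 'M[R]_(N, n) -> 'M[R]_(N, n)) (omega : R -> R),
    0 < K ->
    C1 a ->
    (forall s, 0 <= s -> 0 <= omega s) ->
    (exists M : R, forall s, 0 <= s -> omega s <= M) ->
    omega x @[x --> +oo] --> 0 ->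
    (forall xi : 'M[R]_(N, n),
        opnorm_le (fun h => ('d a xi : 'M[R]_(N, n) -> 'M[R]_(N, n)) h
                            - ('d (bfun p K) xi : 'M[R]_(N, n) -> 'M[R]_(N, n)) h)
                  (omega (enorm xi) * (1 + enorm xi) `^ (p - 2))) ->
    forall (eps Keps : R), 0 < eps -> 1 <= Keps ->
    (forall s, Keps <= s -> omega s <= eps) ->
    forall (delta : R) (A : 'M[R]_(N, n)), 0 <= delta ->
    enorm A + delta >= 8 * supnorm omega * Keps / eps ->
    forall xi : 'M[R]_(N, n),
      enorm (a A - a xi - (bfun p K A - bfun p K xi))
      <= c * eps * (enorm (xi - A) + delta)
           * (1 + enorm A ^+ 2 + enorm (xi - A) ^+ 2) `^ ((p - 2) / 2).
Proof.
have C0 : 0 < 3 `^ ((p - 2) / 2) :> R by apply: powR_gt0.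
exists (2 * 3 `^ ((p - 2) / 2)); split; first by rewrite mulr_gt0.
move=> N n K a omega K0 [da _] om0 [M hM] _ hop eps Keps e0 Ke1 hK delta A d0 hA xi.
move: C0; set C := 3 `^ ((p - 2) / 2) => C0.
set b := bfun p K.
set e := a A - a xi - (b A - b xi).
set h := A - xi.
set L := enorm (xi - A).
have LE : enorm h = L by rewrite /L enormB.
have L0 : 0 <= L by exact: enorm_ge0.
set Q := (1 + enorm A ^+ 2 + L ^+ 2) `^ ((p - 2) / 2).
have Q0 : 0 <= Q by exact: powR_ge0.
set S := supnorm omega.
have omS : forall s, 0 <= s -> omega s <= S.
  move=> s s0; rewrite /S /supnorm; apply: ub_le_sup; last by exists s.
  by exists M => _ [x x0 <-]; exact: hM.
have S0 : 0 <= S := le_trans (om0 0 (lexx 0)) (omS 0 (lexx 0)).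
set En := enorm e.
have En0 : 0 <= En by exact: enorm_ge0.
have db : forall Y, differentiable b Y by move=> Y; exact: diff_bfun.
pose F := a - b.
have FE : forall Y, F Y = a Y - b Y by [].
have dF : forall Y, differentiable F Y.
  by move=> Y; exact: (differentiableB (da Y) (db Y)).
have dFE : forall Y v, 'd F Y v = 'd a Y v - 'd b Y v.
  move=> Y v; exact: (congr1 (fun f => f v) (diffB (da Y) (db Y))).
pose u := fun t : R => xi + t *: h.
pose g := fun t : R => dotm (F (u t)) e.
pose g' := fun t : R => dotm ('d F (u t) h) e.
have dg : forall t : R, is_derive t (1 : R) g (g' t).
  by move=> t; exact: deriv_g.
have g10 : g 1 - g 0 = En ^+ 2.
  rewrite /g /u scale1r scale0r addr0 /h (addrC xi) subrK -dotmBl.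
  have -> : F A - F xi = e.
    by rewrite !FE /e sub4.
  by rewrite enorm_sqr.
pose X := C * Q * En.
have X0 : 0 <= X by rewrite /X !mulr_ge0 // ltW.
have uN : forall t, 0 <= t <= 1 -> enorm (u t) <= enorm A + L.
  move=> t /andP [t0 t1].
  have -> : u t = A + (1 - t) *: (- h).
    exact: uEq.
  apply: le_trans (enormD _ _) _.
  rewrite enormZ enormN LE ger0_norm ?subr_ge0 // lerD2l.
  by rewrite ler_piMl // lerBlDr lerDl.
have gbound : forall t W, 0 <= t <= 1 -> omega (enorm (u t)) <= W -> g' t <= W * L * X.
  move=> t W ht hW.
  have h1 := dotm_CS ('d F (u t) h) e.
  have h2 := hop (u t) h.
  rewrite /opnorm_le /= in h2.
  have h3 := pow_bound hp (enorm_ge0 (u t)) (enorm_ge0 A) L0 (uN t ht).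
  rewrite /g'; apply: le_trans h1 _.
  rewrite dFE.
  apply: le_trans (ler_wpM2r En0 h2) _.
  rewrite LE /X.
  have w0 : 0 <= omega (enorm (u t)) by apply: om0; exact: enorm_ge0.
  have P0 : 0 <= (1 + enorm (u t)) `^ (p - 2) by exact: powR_ge0.
  have h4 : omega (enorm (u t)) * (1 + enorm (u t)) `^ (p - 2) <= W * (C * Q).
    exact: ler_pM.
  have -> : W * L * (C * Q * En) = W * (C * Q) * L * En by ring.
  by rewrite ler_wpM2r // ler_wpM2r.
have main : En ^+ 2 <= 2 * eps * (L + delta) * X.
  have hu : forall t : R, 0 < t < 1 -> 0 <= t <= 1.
    by move=> t /andP[t0 t1]; rewrite (ltW t0) (ltW t1).
  have [[t0 [ht0 hu0]]|nex] := pselect (exists t, 0 < t < 1 /\ enorm (u t) < Keps); last first.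
    have oe : forall t : R, 0 < t < 1 -> omega (enorm (u t)) <= eps.
      move=> t ht; apply: hK; rewrite leNgt; apply/negP => lt; apply: nex; by exists t.
    have := mvi ler01 dg (fun t ht => gbound t eps (hu t ht) (oe t ht)).
    rewrite g10 subr0 mulr1 => H; apply: le_trans H _.
    rewrite ler_wpM2r //; nra.
  move: ht0 => /andP[t00 t01].
  have hAK : enorm A < Keps + L.
    have -> : A = u t0 + (1 - t0) *: h.
      rewrite /u -addrA -scalerDl (_ : t0 + (1 - t0) = 1); last by ring.
      by rewrite scale1r /h addrC subrK.
    apply: le_lt_trans (enormD _ _) _.
    rewrite enormZ LE ger0_norm; last lra.
    have : (1 - t0) * L <= L by rewrite ler_piMl //; lra.
    lra.
  have hSK : 8 * S * Keps <= eps * (enorm A + delta).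
    by move: hA; rewrite -/S ler_pdivrMr // (mulrC (enorm A + delta)).
  have hS7 : S <= eps \/ 7 * S * Keps <= eps * (L + delta).
    case: (leP S eps) => hSe; [by left | right].
    have f1 : eps * enorm A <= eps * (Keps + L) by rewrite ler_pM2l // ltW.
    have f2 : eps * Keps <= S * Keps by rewrite ler_pM2r //; lra.
    nra.
  have [Lsm|Lbig] := leP L (4 * Keps).
    have := mvi ler01 dg (fun t ht => gbound t S (hu t ht) (omS _ (enorm_ge0 _))).
    rewrite g10 subr0 mulr1 => H; apply: le_trans H _.
    rewrite ler_wpM2r //.
    case: hS7 => hS.
      have : S * L <= eps * L by rewrite ler_wpM2r.
      nra.
    have : S * L <= S * (4 * Keps) by rewrite ler_wpM2l.
    nra.
  have Lp : 0 < L by lra.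
  pose r := 2 * Keps / L.
  have r0 : 0 < r by rewrite /r divr_gt0 //; lra.
  have rL : r * L = 2 * Keps by rewrite /r divfK // gt_eqF.
  pose t1 := Num.max 0 (t0 - r).
  pose t2 := Num.min 1 (t0 + r).
  have t10 : 0 <= t1 by rewrite /t1 le_max lexx.
  have t12 : t1 <= t2.
    rewrite /t1 /t2 ge_max !le_min.
    apply/andP; split; apply/andP; split; lra.
  have t21 : t2 <= 1 by rewrite /t2 ge_min lexx.
  have t2r : t2 <= t0 + r by rewrite /t2 ge_min lexx orbT.
  have t1r : t0 - r <= t1 by rewrite /t1 le_max lexx orbT.
  have far : forall t : R, r <= `|t - t0| -> omega (enorm (u t)) <= eps.
    move=> t hr; apply: hK.
    have E1 : u t0 - u t = (t0 - t) *: h.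
      by rewrite /u opprD addrACA subrr add0r scalerBl.
    have E2 : enorm (u t0 - u t) = `|t - t0| * L by rewrite E1 enormZ LE distrC.
    have E3 : enorm (u t0 - u t) <= enorm (u t0) + enorm (u t).
      by apply: le_trans (enormD _ _) _; rewrite enormN.
    have : r * L <= `|t - t0| * L by rewrite ler_wpM2r.
    lra.
  have P1 : g t1 - g 0 <= eps * L * X * (t1 - 0).
    apply: mvi t10 dg _ => t /andP[ta tb].
    apply: gbound; first by apply/andP; split; lra.
    apply: far; rewrite ler_normr; apply/orP; right.
    move: tb; rewrite /t1 lt_max => /orP[|]; lra.
  have P2 : g t2 - g t1 <= S * L * X * (t2 - t1).
    apply: mvi t12 dg _ => t /andP[ta tb].
    apply: gbound; first by apply/andP; split; lra.
    exact/omS/enorm_ge0.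
  have P3 : g 1 - g t2 <= eps * L * X * (1 - t2).
    apply: mvi t21 dg _ => t /andP[ta tb].
    apply: gbound; first by apply/andP; split; lra.
    apply: far; rewrite ler_normr; apply/orP; left.
    move: ta; rewrite /t2 gt_min => /orP[|]; lra.
  have Esum : En ^+ 2 = (g 1 - g t2) + (g t2 - g t1) + (g t1 - g 0) by rewrite -g10; ring.
  have eLX : 0 <= eps * L * X by rewrite !mulr_ge0 // ltW.
  have SLX : 0 <= S * L * X by apply: mulr_ge0 => //; apply: mulr_ge0.
  have F1 : eps * L * X * (1 - t2) + eps * L * X * (t1 - 0) <= eps * L * X.
    have -> : eps * L * X * (1 - t2) + eps * L * X * (t1 - 0) = eps * L * X * (1 - (t2 - t1)) by ring.
    by rewrite ler_piMr //; lra.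
  have F2 : S * L * X * (t2 - t1) <= S * L * X * (2 * r).
    by rewrite ler_wpM2l //; lra.
  have F2' : S * L * X * (2 * r) = 4 * S * Keps * X.
    have -> : S * L * X * (2 * r) = 2 * S * X * (r * L) by ring.
    by rewrite rL; ring.
  have F3 : 4 * S * Keps <= eps * (L + delta).
    case: hS7 => hS.
      have : S * Keps <= eps * Keps by rewrite ler_wpM2r //; lra.
      nra.
    nra.
  have F3' : 4 * S * Keps * X <= eps * (L + delta) * X by rewrite ler_wpM2r.
  have F4 : eps * L * X <= eps * (L + delta) * X.
    rewrite ler_wpM2r //; nra.
  rewrite Esum.
  have -> : 2 * eps * (L + delta) * X = eps * (L + delta) * X + eps * (L + delta) * X by ring.
  lra.
have T0 : 0 <= 2 * C * eps * (L + delta) * Q.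
  have : 0 <= L + delta by lra.
  by move=> ?; rewrite !mulr_ge0 // ltW.
have [Ez|Ep] := eqVneq En 0.
  by rewrite Ez.
have Epos : 0 < En by rewrite lt_def Ep En0.
have : En * En <= (2 * C * eps * (L + delta) * Q) * En.
  rewrite -expr2; apply: le_trans main _; rewrite /X.
  have -> : 2 * eps * (L + delta) * (C * Q * En) = 2 * C * eps * (L + delta) * Q * En by ring.
  by [].
by rewrite ler_pM2r.
Qed.
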